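(* For every integer $n\ge 4$ there exist a boolean classifier $\kappa:\{0,1\}^n\to\{0,1\}$ and a point $\mathbf v\in\{0,1\}^n$ such that, for the sample $(\mathbf v,\kappa(\mathbf v))$, there exist an irrelevant feature $i_1\in\mathcal F$ and a relevant feature $i_2\in\mathcal F\setminus\{i_1\}$ with $\mathrm{Sv}(i_1)\cdot\mathrm{Sv}(i_2)>0$ (issue I6).
   Context: Let $\mathcal F=\{1,\dots,n\}$. A boolean classifier is a non-constant function $\kappa:\{0,1\}^n\to\{0,1\}$; a sample is a pair $(\mathbf v,c)$ with $\mathbf v\in\{0,1\}^n$ and $c=\kappa(\mathbf v)$. For $\mathcal S\subseteq\mathcal F$ let $\Upsilon(\mathcal S;\mathbf v)=\{\mathbf x\in\{0,1\}^n : x_j=v_j \text{ for all } j\in\mathcal S\}$ and, for any function $g$ on $\{0,1\}^n$, $\mathbf E[g\mid \mathbf x_{\mathcal S}=\mathbf v_{\mathcal S}]=|\Upsilon(\mathcal S;\mathbf v)|^{-1}\sum_{\mathbf x\in\Upsilon(\mathcal S;\mathbf v)}g(\mathbf x)$ (uniform distribution, independent features). The characteristic function is $\upsilon(\mathcal S)=\mathbf E[\kappa\mid\mathbf x_{\mathcal S}=\mathbf v_{\mathcal S}]$, and the SHAP score of feature $i$ is $\mathrm{Sv}(i)=\sum_{\mathcal S\subseteq\mathcal F\setminus\{i\}}\frac{|\mathcal S|!\,(n-|\mathcal S|-1)!}{n!}\big(\upsilon(\mathcal S\cup\{i\})-\upsilon(\mathcal S)\big)$. The similarity predicate is $\sigma(\mathbf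 x)=1$ if $\kappa(\mathbf x)=\kappa(\mathbf v)$ and $0$ otherwise. A set $\mathcal S\subseteq\mathcal F$ is a weak abductive explanation (WAXp) if $\mathbf E[\sigma\mid\mathbf x_{\mathcal S}=\mathbf v_{\mathcal S}]=1$ (i.e. $\kappa(\mathbf x)=\kappa(\mathbf v)$ for all $\mathbf x\in\Upsilon(\mathcal S;\mathbf v)$); an abductive explanation (AXp) is a WAXp $\mathcal S$ such that $\mathcal S\setminus\{t\}$ is not a WAXp for every $t\in\mathcal S$. A feature is relevant if it belongs to at least one AXp, and irrelevant otherwise. *)

(* Defs.v *)
(* Features F = 'I_n (0-indexed), points {0,1}^n = {ffun 'I_n -> bool},
   exact arithmetic in rat. *)
From mathcomp Require Import all_boot all_order all_algebra.
Set Implicit Arguments. Unset Strict Implicit. Unset Printing Implicit Defensive.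
Import Order.TTheory GRing.Theory Num.Theory.
Local Open Scope ring_scope.

Definition point (n : nat) := {ffun 'I_n -> bool}.

Definition nonconstant (n : nat) (kappa : point n -> bool) : Prop :=
  exists x y : point n, kappa x != kappa y.

Definition Upsilon (n : nat) (S : {set 'I_n}) (v : point n) : {set point n} :=
  [set x : point n | [forall j in S, x j == v j]].

(* E[g | x_S = v_S] under the uniform distribution *)
Definition condE (n : nat) (g : point n -> rat) (S : {set 'I_n}) (v : point n) : rat :=
  (\sum_(x in Upsilon S v) g x) / (#|Upsilon S v|)%:R.

Definition charfun (n : nat) (kappa : point n -> bool) (v : point n)
  (S : {set 'I_n}) : rat :=
  condE (fun x => (kappa x)%:R) S v.

Definition Sv (n : nat) (kappa : point n -> bool) (v : point n) (i : 'I_n) : rat :=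
  \sum_(S : {set 'I_n} | i \notin S)
     ((#|S|)`! * (n - #|S| - 1)`!)%:R / (n`!)%:R *
     (charfun kappa v (S :|: [set i]) - charfun kappa v S).

Definition sigma (n : nat) (kappa : point n -> bool) (v : point n) (x : point n) : rat :=
  (kappa x == kappa v)%:R.

Definition WAXp (n : nat) (kappa : point n -> bool) (v : point n) (S : {set 'I_n}) : Prop :=
  condE (sigma kappa v) S v = 1.

Definition AXp (n : nat) (kappa : point n -> bool) (v : point n) (S : {set 'I_n}) : Prop :=
  WAXp kappa v S /\ (forall t, t \in S -> ~ WAXp kappa v (S :\ t)).

Definition relevant (n : nat) (kappa : point n -> bool) (v : point n) (i : 'I_n) : Prop :=
  exists S : {set 'I_n}, AXp kappa v S /\ i \in S.

Definition irrelevant (n : nat) (kappa : point n -> bool) (v : point n) (i : 'I_n) : Prop :=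
  ~ relevant kappa v i.

(* Main.v *)
Require Import Defs.
From mathcomp Require Import all_boot all_order all_algebra.
From mathcomp Require Import ring lra.
Import Order.TTheory GRing.Theory Num.Theory.
Set Implicit Arguments. Unset Strict Implicit. Unset Printing Implicit Defensive.
Local Open Scope ring_scope.

Definition flip (n : nat) (i : 'I_n) (x : point n) : point n :=
  [ffun j => if j == i then ~~ x j else x j].

Lemma flipK n (i : 'I_n) : involutive (flip i).
Proof. move=> x; apply/ffunP => j; rewrite !ffunE; by case: eqP => // _; rewrite negbK. Qed.

Lemma flip_inj n (i : 'I_n) : injective (flip i).
Proof. exact: inv_inj (flipK i). Qed.

Lemma memU n (S : {set 'I_n}) v i x :
  (x \in Upsilon (S :|: [set i]) v) = (x \in Upsilon S v) && (x i == v i).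
Proof.
rewrite !inE; apply/forallP/andP => [H|[/forallP H1 /eqP H2] j].
  split; last by apply: (implyP (H i)); rewrite !inE eqxx orbT.
  apply/forallP => j; apply/implyP => jS; apply: (implyP (H j)).
  by rewrite inE jS.
apply/implyP; rewrite !inE => /orP [jS|/eqP ->]; last by rewrite H2.
exact: (implyP (H1 j)).
Qed.

Lemma memflip n (S : {set 'I_n}) v i x : i \notin S ->
  (flip i x \in Upsilon S v) = (x \in Upsilon S v).
Proof.
move=> hi; rewrite !inE; apply: eq_forallb => j; rewrite ffunE.
case: (eqVneq j i) => [->|//]; by rewrite (negbTE hi).
Qed.

Lemma split_sum n (S : {set 'I_n}) v i (f : point n -> rat) : i \notin S ->
  \sum_(x in Upsilon S v) f x =
  \sum_(x in Upsilon (S :|: [set i]) v) f x +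
  \sum_(x in Upsilon (S :|: [set i]) v) f (flip i x).
Proof.
move=> hi; rewrite (bigID (fun x : point n => x i == v i)) /=; congr (_ + _).
  by apply: eq_bigl => x; rewrite memU.
rewrite (reindex_inj (@flip_inj n i)) /=.
apply: eq_bigl => x; rewrite memU memflip // ffunE eqxx.
by case: (x i); case: (v i).
Qed.

Lemma v_in n (S : {set 'I_n}) v : v \in Upsilon S v.
Proof. by rewrite inE; apply/forallP => j; apply/implyP. Qed.

Lemma marg n (kappa : point n -> bool) v (i : 'I_n) (S : {set 'I_n}) : i \notin S ->
  charfun kappa v (S :|: [set i]) - charfun kappa v S =
  (\sum_(x in Upsilon (S :|: [set i]) v) (kappa x)%:R
   - \sum_(x in Upsilon (S :|: [set i]) v) (kappa (flip i x))%:R)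
  / (2 * (#|Upsilon (S :|: [set i]) v|)%:R).
Proof.
move=> hi; rewrite /charfun /condE (split_sum _ _ hi).
have hc : ((#|Upsilon S v|)%:R : rat) = 
   (#|Upsilon (S :|: [set i]) v|)%:R + (#|Upsilon (S :|: [set i]) v|)%:R.
  by have := split_sum v (fun=> (1 : rat)) hi; rewrite !sumr_const.
rewrite hc.
have : ((#|Upsilon (S :|: [set i]) v|)%:R : rat) != 0.
  by rewrite pnatr_eq0 -lt0n; apply/card_gt0P; exists v; apply: v_in.
move: (#|Upsilon (S :|: [set i]) v|)%:R => c hc0.
field. by rewrite hc0 -mulr2n mulrn_eq0 hc0.
Qed.

Lemma Sv_neg n (kappa : point n -> bool) (v : point n) (i : 'I_n) :
  (forall x : point n, x i = v i -> (kappa x <= kappa (flip i x))%N) ->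
  (exists x : point n, x i = v i /\ kappa x = false /\ kappa (flip i x) = true) ->
  Sv kappa v i < 0.
Proof.
move=> Hle [w [wi [kw kfw]]].
have hm : forall S : {set 'I_n}, i \notin S ->
   charfun kappa v (S :|: [set i]) - charfun kappa v S <= 0.
  move=> S hi; rewrite marg // pmulr_lle0 ?invr_gt0 ?mulr_gt0 //; last first.
    by rewrite ltr0n lt0n -lt0n; apply/card_gt0P; exists v; apply: v_in.
  rewrite subr_le0; apply: ler_sum => x; rewrite memU => /andP [_ /eqP xi].
  by rewrite ler_nat Hle.
have h0 : charfun kappa v (set0 :|: [set i]) - charfun kappa v set0 < 0.
  rewrite marg ?inE // pmulr_llt0 ?invr_gt0 ?mulr_gt0 //; last first.
    by rewrite ltr0n lt0n -lt0n; apply/card_gt0P; exists v; apply: v_in.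
  have wU : w \in Upsilon (set0 :|: [set i]) v.
    by rewrite memU wi eqxx andbT inE; apply/forallP => j; rewrite inE.
  rewrite subr_lt0 (bigD1 w wU) [X in _ < X](bigD1 w wU) /= kw kfw.
  apply: ltr_leD; first by rewrite ltr_nat.
  apply: ler_sum => x /andP [hx _]; have : x \in Upsilon (set0 :|: [set i]) v := hx; rewrite memU => /andP [_ /eqP xi].
  by rewrite ler_nat Hle.
rewrite /Sv (bigD1 set0) ?inE //=.
have hw : forall S : {set 'I_n}, 0 < ((#|S|)`! * (n - #|S| - 1)`!)%:R / (n`!)%:R :> rat.
  move=> S; rewrite divr_gt0 // ltr0n ?muln_gt0 ?fact_gt0 //.
rewrite -[0]addr0; apply: ltr_leD.
  by rewrite pmulr_rlt0.
apply: sumr_le0 => S /andP [hi _].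
by rewrite pmulr_rle0 // hm.
Qed.

Lemma waxpP n (kappa : point n -> bool) (v : point n) (S : {set 'I_n}) :
  WAXp kappa v S <-> (forall x, x \in Upsilon S v -> kappa x = kappa v).
Proof.
rewrite /WAXp /condE /sigma.
have hN : ((#|Upsilon S v|)%:R : rat) != 0.
  by rewrite pnatr_eq0 -lt0n; apply/card_gt0P; exists v; apply: v_in.
split.
  move=> H.
  have Hs : \sum_(x in Upsilon S v) ((kappa x == kappa v)%:R : rat) = 
            \sum_(x in Upsilon S v) 1.
    by rewrite sumr_const -[LHS](divfK hN) H mul1r.
  have H0 : \sum_(x in Upsilon S v) (1 - ((kappa x == kappa v)%:R : rat)) = 0.
    by rewrite sumrB Hs subrr.
  move=> x hx.
  have H1 : forall y : point n, y \in Upsilon S v -> 0 <= 1 - ((kappa y == kappa v)%:R : rat).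
    by move=> y _; case: eqP => _; rewrite /= ?subrr ?subr0.
  have := psumr_eq0P H1 H0 hx.
  by case: eqP => //= _; rewrite subr0 => /eqP; rewrite oner_eq0.
move=> H.
rewrite (eq_bigr (fun _ => 1)); first by rewrite sumr_const divff.
by move=> x hx; rewrite H // eqxx.
Qed.

Theorem proposition5 (n : nat) (hn : (4 <= n)%N) :
  exists (kappa : point n -> bool) (v : point n),
    nonconstant kappa /\
    exists i1 i2 : 'I_n,
      irrelevant kappa v i1 /\ relevant kappa v i2 /\ i2 != i1 /\
      0 < Sv kappa v i1 * Sv kappa v i2.
Proof.
pose a : 'I_n := @Ordinal n 0 (leq_trans (isT : (0 < 4)%N) hn).
pose b : 'I_n := @Ordinal n 1 (leq_trans (isT : (1 < 4)%N) hn).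
pose c : 'I_n := @Ordinal n 2 (leq_trans (isT : (2 < 4)%N) hn).
pose d : 'I_n := @Ordinal n 3 (leq_trans (isT : (3 < 4)%N) hn).
have ab : a != b by [].
have ac : a != c by [].
have bc : b != c by [].
have cd : c != d by [].
have ad : a != d by [].
have bd : b != d by [].
pose kappa (x : point n) := ~~ x a && ~~ x b && (~~ x c || x d).
pose v : point n := [ffun => true].
have kv : kappa v = false by rewrite /kappa ffunE.
have WA : forall S, WAXp kappa v S <-> (a \in S \/ b \in S).
  move=> S; rewrite waxpP kv; split.
    move=> H; case haS: (a \in S); first by left.
    case hbS: (b \in S); first by right.
    pose x : point n := [ffun j => (j != a) && (j != b)].
    have : x \in Upsilon S v.
      rewrite inE; apply/forallP => j; apply/implyP => jS; rewrite !ffunE.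
      case: (eqVneq j a) => [ja|_]; first by rewrite ja haS in jS.
      case: (eqVneq j b) => [jb|_]; first by rewrite jb hbS in jS.
      by [].
    by move/H; rewrite /kappa !ffunE.
  move=> H x; rewrite inE => /forallP hx; rewrite /kappa.
  case: H => H.
    by have := implyP (hx a) H; rewrite ffunE => /eqP ->.
  by have := implyP (hx b) H; rewrite ffunE => /eqP ->; rewrite andbF.
exists kappa, v; split.
  exists v, [ffun => false]; by rewrite kv /kappa !ffunE.
exists c, a; split; last split; last split.
- move=> [S [[HW Hmin] cS]].
  apply: (Hmin c cS); apply/WA; case/WA: HW => H; [left|right];
    by rewrite !inE H ?andbT // eq_sym.
- exists [set a]; split; last by rewrite inE.
  split; first by apply/WA; left; rewrite inE.
  move=> t; rewrite inE => /eqP ->; rewrite setDv => /WA; by rewrite !inE; case.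
- by [].
- have Hc : Sv kappa v c < 0.
    apply: Sv_neg.
      move=> x; rewrite ffunE /kappa !ffunE eqxx /= => ->.
      by case: (x a); case: (x b); case: (x d).
    exists [ffun j => j == c]; rewrite !ffunE eqxx; split => //.
    by rewrite /kappa !ffunE.
  have Ha : Sv kappa v a < 0.
    apply: Sv_neg.
      by move=> x; rewrite ffunE /kappa => ->.
    exists [ffun j => j == a]; rewrite !ffunE eqxx; split => //.
    by rewrite /kappa !ffunE.
  by rewrite nmulr_rgt0.
Qed.
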